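(* Let $t\ge 2$. If $G$ is a stitched 2-ichromatic ordered graph whose parts have sizes $m$ and $n$, then $R_t(G)\ge 2tr+1$, where $r=\min(m,n)-1$.
   Context: An ordered graph is a graph together with a specified linear ordering of its vertex set. An ordered graph $G$ is contained in an ordered graph $H$ if there is an order-preserving injection $V(G)\to V(H)$ mapping edges to edges. An interval coloring of an ordered graph is a partition of its vertex set into independent sets each consisting of consecutive vertices (called parts); an ordered graph is 2-ichromatic if its minimum number of parts in an interval coloring is 2. A 2-ichromatic ordered graph is stitched if the four vertices consisting of the first and last vertex of each of the two parts lie in a single connected component (then the interval 2-coloring is unique). $R_t(G)$ is the minimum $N$ such that every coloring of the edges of the ordered complete graph on $N$ vertices with $t$ colors contains a monochromatic copy of $G$. *)

(* Defs.v *)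
From mathcomp Require Import all_boot.
Set Implicit Arguments. Unset Strict Implicit. Unset Printing Implicit Defensive.

Definition ordered_graph (k : nat) (e : rel 'I_k) : Prop :=
  symmetric e /\ irreflexive e.

Definition indep_interval (k : nat) (e : rel 'I_k) (lo hi : nat) : Prop :=
  forall x y : 'I_k, lo <= x < hi -> lo <= y < hi -> ~~ e x y.

Definition interval_coloring (k : nat) (e : rel 'I_k) (p : nat) : Prop :=
  exists s : seq nat,
    [/\ size s = p.+1, nth 0 s 0 = 0, nth 0 s p = k, sorted ltn s &
        forall i, i < p -> indep_interval e (nth 0 s i) (nth 0 s i.+1)].

Definition two_ichromatic (k : nat) (e : rel 'I_k) : Prop :=
  interval_coloring e 2 /\ forall p, p < 2 -> ~ interval_coloring e p.

Definition two_split (k : nat) (e : rel 'I_k) (a : nat) : Prop :=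
  [/\ 0 < a, a < k, indep_interval e 0 a & indep_interval e a k].

(* Stitched w.r.t. the 2-coloring split at a: the first and last vertices of
   both parts (0, a-1, a, k-1) lie in a single connected component. *)
Definition stitched_at (k : nat) (e : rel 'I_k) (a : nat) : Prop :=
  forall u v : 'I_k,
    val u \in [:: 0; a.-1; a; k.-1] -> val v \in [:: 0; a.-1; a; k.-1] ->
    connect e u v.

(* A t-coloring of the edges of the ordered complete graph on N vertices:
   the edge {x,y} with x < y gets color c x y. c contains a monochromatic copy
   of G = ('I_k, e) if there is an order-preserving injection f (strictly
   increasing) and a color i with every edge mapped to an edge of color i. *)
Definition mono_copy (t N k : nat) (e : rel 'I_k) (c : 'I_N -> 'I_N -> 'I_t) : Prop :=
  exists (f : 'I_k -> 'I_N) (i : 'I_t),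
    (forall x y : 'I_k, x < y -> f x < f y) /\
    (forall x y : 'I_k, x < y -> e x y -> c (f x) (f y) = i).

(* N has the Ramsey property: every t-coloring of K_N has a monochromatic G.
   R_t(G) is the least such N. *)
Definition ramsey_prop (t N k : nat) (e : rel 'I_k) : Prop :=
  forall c : 'I_N -> 'I_N -> 'I_t, mono_copy e c.

(* Main.v *)
Require Import Defs.
From mathcomp Require Import all_boot.
From mathcomp Require Import zify.

Set Implicit Arguments. Unset Strict Implicit. Unset Printing Implicit Defensive.

Lemma incr_gap (k : nat) (g : 'I_k -> nat) :
  (forall x y : 'I_k, x < y -> g x < g y) ->
  forall n (x y : 'I_k), (y : nat) = x + n -> g x + n <= g y.
Proof.
move=> Hg; elim=> [|n IH] x y Hy.
  by rewrite addn0 in Hy; rewrite addn0 (val_inj Hy).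
have Hlt : x + n < k by have := ltn_ord y; lia.
have := IH x (Ordinal Hlt) erefl.
have : g (Ordinal Hlt) < g y by apply: Hg => /=; lia.
lia.
Qed.

Lemma mod_gap (t m n : nat) : 0 < t -> n < m -> m = n %[mod t] -> n + t <= m.
Proof.
move=> tp nm /eqP; rewrite eqn_mod_dvd; last by apply: ltnW.
move=> /dvdn_leq; have : 0 < m - n by lia.
move=> H1 /(_ H1); lia.
Qed.

Lemma path_inv (k : nat) (e : rel 'I_k) (s : 'I_k -> bool) (bl : 'I_k -> nat)
  (t i : nat) (z : 'I_k) :
  (forall u v, e u v -> s v = ~~ s u) ->
  (forall u v, e u v -> (bl u + bl v) %% t = i) ->
  forall w, connect e z w ->
    if s w == s z then bl w = bl z %[mod t] else (bl w + bl z) %% t = i.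
Proof.
move=> Hs Hb w /connectP [p Hp ->].
pose P (w : 'I_k) := if s w == s z then bl w = bl z %[mod t] else (bl w + bl z) %% t = i.
suff gen : forall x, P x -> path e x p -> P (last x p).
  by apply: gen => //; rewrite /P eqxx.
elim: p {Hp} => [|y p IH] x //= Hx /andP [Exy Hp].
move: Hp; apply: IH; rewrite /P in Hx *.
rewrite (Hs _ _ Exy).
have Hxy := Hb _ _ Exy.
case: (s x =P s z) Hx => [Esx|Nsx] Hx.
  rewrite Esx.
  have -> : (~~ s z == s z) = false by case: (s z).
  by rewrite -modnDmr -Hx modnDmr addnC.
have -> : (~~ s x == s z) = true by case: (s x) (s z) Nsx => [] [].
by apply/eqP; rewrite -(eqn_modDl (bl x)) Hxy Hx.
Qed.

Theorem corollary5p1 (t k : nat) (e : rel 'I_k) (a : nat) :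
  2 <= t ->
  ordered_graph e ->
  two_ichromatic e ->
  two_split e a ->
  stitched_at e a ->
  forall N : nat, ramsey_prop t N e ->
    2 * t * (minn a (k - a) - 1) + 1 <= N.
Proof.
move=> Ht [Hsym Hirr] _ [a0 ak IA IB] Hst N HR.
have tp : 0 < t by lia.
set r := minn a (k - a) - 1.
have k0 : 0 < k by lia.
have Npos : 0 < N.
  have [f [i [_ _]]] := HR (fun _ _ => Ordinal tp).
  exact: (leq_ltn_trans (leq0n _) (ltn_ord (f (Ordinal ak)))).
have [r0|rp] := posnP r; first by rewrite r0 muln0.
rewrite leqNgt; apply/negP => HN.
pose c (x y : 'I_N) : 'I_t := Ordinal (ltn_pmod (x %/ r + y %/ r) tp).
have [f [i [Hf Hc]]] := HR c.
pose bl (v : 'I_k) := f v %/ r.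
have Hb : forall u v, e u v -> (bl u + bl v) %% t = i.
  move=> u v Euv; case: (ltngtP u v) => [uv|vu|uv].
  - by have := Hc _ _ uv Euv => /(congr1 val).
  - rewrite Hsym in Euv; have := Hc _ _ vu Euv => /(congr1 val) /= <-.
    by rewrite /bl addnC.
  - by rewrite (val_inj uv) Hirr in Euv.
have Hs : forall u v, e u v -> (v < a) = ~~ (u < a).
  move=> u v Euv; case Hu: (u < a); case Hv: (v < a) => //.
  - have Hu' : 0 <= u < a by rewrite Hu.
    have Hv' : 0 <= v < a by rewrite Hv.
    by case/negP: (IA u v Hu' Hv').
  - have Hu' : a <= u < k by rewrite leqNgt Hu ltn_ord.
    have Hv' : a <= v < k by rewrite leqNgt Hv ltn_ord.
    by case/negP: (IB u v Hu' Hv').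
have Hsi : forall u v, e u v -> (fun w : 'I_k => w < a) v = ~~ (fun w : 'I_k => w < a) u.
  by [].
have ka1 : a.-1 < k by lia.
have kk1 : k.-1 < k by lia.
pose z0 : 'I_k := Ordinal k0.
pose z1 : 'I_k := Ordinal ka1.
pose z2 : 'I_k := Ordinal ak.
pose z3 : 'I_k := Ordinal kk1.
have C01 : connect e z0 z1 by apply: Hst; rewrite !inE eqxx ?orbT.
have C23 : connect e z2 z3 by apply: Hst; rewrite !inE eqxx ?orbT.
have I01 := path_inv Hsi Hb C01.
have I23 := path_inv Hsi Hb C23.
have H1 : (z1 : nat) < a by rewrite /= prednK // leqnn.
have H0 : (z0 : nat) < a by [].
have H2 : ((z2 : nat) < a) = false by rewrite /= ltnn.
have H3 : ((z3 : nat) < a) = false.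
  by apply/negbTE; rewrite -leqNgt /= -ltnS prednK.
rewrite H1 H0 eqxx in I01.
rewrite H2 H3 eqxx in I23.
have Hg := incr_gap Hf.
have G01 : f z0 + r <= f z1.
  have := Hg (a.-1) z0 z1 erefl; rewrite /r; lia.
have G23 : f z2 + r <= f z3.
  have := Hg (k.-1 - a) z2 z3 (ltac:(rewrite /=; lia)); rewrite /r; lia.
have G12 : f z1 < f z2 by apply: Hf => /=; lia.
have divstep : forall x y, x + r <= y -> x %/ r < y %/ r.
  move=> x y Hxy; apply: (@leq_trans ((x + r) %/ r)); last exact: leq_div2r.
  by rewrite divnDr ?dvdnn // divnn rp addn1.
have B01 := mod_gap tp (divstep _ _ G01) I01.
have B23 := mod_gap tp (divstep _ _ G23) I23.
have B12 : bl z1 <= bl z2 by apply: leq_div2r; apply: ltnW.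
have B3 : bl z3 < 2 * t.
  rewrite /bl ltn_divLR //; apply: (leq_trans (ltn_ord _)); lia.
rewrite /bl in B01 B23 B12 B3.
move: B01 B23 B12 B3.
move: (f z0 %/ r) (f z1 %/ r) (f z2 %/ r) (f z3 %/ r) => x0 x1 x2 x3.
clear; lia.
Qed.
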